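(* Let $G$ be an additive group and let $(X,\rho)$ be the metric space described below. The map $\varphi:X\to(0,+\infty)$, $\varphi((f,a_f))=a_f$, is a submetry, i.e. it maps every open ball $B(x,r)$ in $X$ onto the ball of the same radius $r$ centered at $\varphi(x)$ in $(0,+\infty)$ (with the standard metric $|s-t|$).
   Context: A function on an interval $(\alpha,\beta)$ is piecewise constant from the left if for every $x$ there is $\varepsilon>0$ with $f$ constant on $[x-\varepsilon,x]$. $X$ is the set of pairs $(f,a_f)$, $a_f>0$ real, $f:(a_f,+\infty)\to G$ piecewise constant from the left with $f|_{(b_f,+\infty)}\equiv0$ for some $b_f\ge a_f$. Order: $(f,a_f)\preceq(g,a_g)$ iff $a_f\le a_g$ and $f|_{(a_g,+\infty)}=g$; any two elements $p,q$ have a supremum $p\vee q$. Metric: $\rho((f,a_f),(g,a_g))=|a_f-a_g|$ if the pairs are comparable, and $\rho(p,q)=\rho(p,p\vee q)+\rho(p\vee q,q)$ otherwise. *)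

(* Defs.v *)
From HB Require Import structures.
From mathcomp Require Import all_boot all_order all_algebra.
From mathcomp Require Import all_classical reals.
From Stdlib Require Import ClassicalEpsilon.
Set Implicit Arguments. Unset Strict Implicit. Unset Printing Implicit Defensive.
Import Order.TTheory GRing.Theory Num.Theory.
Local Open Scope ring_scope.

Section SpaceX.
Variables (R : realType) (G : zmodType).

(* The function f : (a_f, +oo) -> G is represented
   by a total function R -> G normalized to be 0 outside (a_f, +oo), so that
   equality of elements of X is equality of the pairs (f, a_f). *)
Record Xel := MkXel {
  xa : R ;
  xf : R -> G ;
  xa_pos : 0 < xa ;
  xf_out : forall t, t <= xa -> xf t = 0 ;
  xf_plc : forall x, xa < x ->
     exists eps, 0 < eps /\ forall y, x - eps <= y <= x -> xf y = xf x ;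
  xf_ev : exists b, xa <= b /\ forall t, b < t -> xf t = 0
}.

Definition Xle (p q : Xel) : Prop :=
  xa p <= xa q /\ forall t, xa q < t -> xf p t = xf q t.

Definition Xcomparable (p q : Xel) : Prop := Xle p q \/ Xle q p.

Definition is_Xsup (p q s : Xel) : Prop :=
  Xle p s /\ Xle q s /\ forall u, Xle p u -> Xle q u -> Xle s u.

(* the supremum p \/ q (chosen by Hilbert's epsilon among least upper bounds;
   existence is asserted in the paper) *)
Definition Xsup (p q : Xel) : Xel := epsilon (inhabits p) (is_Xsup p q).

Definition rho_cmp (p q : Xel) : R := `|xa p - xa q|.

Definition rho (p q : Xel) : R :=
  if excluded_middle_informative (Xcomparable p q) then rho_cmp p q
  else rho_cmp p (Xsup p q) + rho_cmp (Xsup p q) q.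

Definition phi (p : Xel) : R := xa p.

End SpaceX.

(* Main.v *)
Require Import Defs.
From HB Require Import structures.
From mathcomp Require Import all_boot all_order all_algebra.
From mathcomp Require Import all_classical reals.
From mathcomp Require Import lra.
From Stdlib Require Import ClassicalEpsilon.
Import Order.TTheory GRing.Theory Num.Theory.
Local Open Scope ring_scope.
Local Open Scope classical_set_scope.

Lemma mk_trunc (R : realType) (G : zmodType) (x : Xel R G) (t : R) :
  0 < t -> exists y : Xel R G, xa y = t /\
    forall s, xf y s = if t < s then xf x s else 0.
Proof.
move=> ht.
have out : forall s, s <= t -> (if t < s then xf x s else 0) = 0.
  by move=> s hs; rewrite ltNge hs.
have plc : forall s, t < s -> exists eps, 0 < eps /\ forall z, s - eps <= z <= s ->
    (if t < z then xf x z else 0) = (if t < s then xf x s else 0).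
  move=> s hs; rewrite hs.
  have [hxs|hxs] := ltP (xa x) s.
    have [eps [he hE]] := xf_plc hxs.
    exists (Order.min eps ((s - t) / 2)); split.
      by rewrite lt_min he /=; lra.
    move=> z /andP[h1 h2].
    have hm1 : Order.min eps ((s - t) / 2) <= eps by rewrite ge_min lexx.
    have hm2 : Order.min eps ((s - t) / 2) <= (s - t) / 2 by rewrite ge_min lexx orbT.
    have -> : t < z by lra.
    apply: hE; apply/andP; split; lra.
  exists ((s - t) / 2); split; first lra.
  move=> z /andP[h1 h2].
  have -> : t < z by lra.
  have hz : z <= xa x by lra.
  by rewrite (xf_out hz) (xf_out hxs).
have ev : exists b, t <= b /\ forall s, b < s -> (if t < s then xf x s else 0) = 0.
  have [b [hb hB]] := xf_ev x.
  exists (Num.max b t); split; first by rewrite le_max lexx orbT.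
  move=> s hs; case: ifP => // _; apply: hB.
  by move: hs; rewrite gt_max => /andP[].
by exists (@MkXel R G t _ ht out plc ev).
Qed.

Theorem lemma7 (R : realType) (G : zmodType) (x : Xel R G) (r : R) :
  0 < r ->
  (@phi R G) @` [set y | rho x y < r] = [set t : R | 0 < t /\ `|t - phi x| < r].
Proof.
move=> hr; apply/seteqP; split.
  move=> _ [y Hy <-]; split; first exact: xa_pos.
  rewrite /phi distrC; apply: le_lt_trans Hy.
  rewrite /rho; destruct (excluded_middle_informative _); first by [].
  exact: ler_distD.
move=> t [ht htr].
have [y [hy hf]] := @mk_trunc R G x t ht.
exists y; last by rewrite /phi hy.
rewrite /= /rho.
have hc : Xcomparable x y.
  have [hle|hle] := leP (xa x) t.
    left; split; first by rewrite hy.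
    by move=> s; rewrite hy hf => ->.
  right; split; first by rewrite hy ltW.
  move=> s hs; rewrite hf.
  have -> : t < s by apply: lt_trans hs.
  reflexivity.
destruct (excluded_middle_informative _) as [hh|hn]; last by exfalso; apply: hn.
rewrite /rho_cmp hy distrC; exact: htr.
Qed.
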